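(* Let $f:\mathbb{F}_q^k\to\mathrm{Im}(f)$ with $|\mathrm{Im}(f)|\ge 2$, and let $d_d<d_f$ be positive integers. Suppose $n$ is an integer satisfying $q^{n-k}=\sum_{i=0}^{\lfloor (d_d-1)/2\rfloor}\binom{n}{i}(q-1)^i$. Then $r_f(k:d_d,d_f)\ge n-k+1$.
   Context: $d(\cdot,\cdot)$ is Hamming distance. For $f:\mathbb{F}_q^k\to\mathrm{Im}(f)$ and integers $0\le d_d\le d_f$, an $(f\!:d_d,d_f)$-FCC with redundancy $r$ is a systematic encoding $\mathfrak{C}_f(u)=(u,p_u)\in\mathbb{F}_q^{k+r}$ with $d(\mathfrak{C}_f(u_1),\mathfrak{C}_f(u_2))\ge d_d$ whenever $u_1\ne u_2$ and $\ge d_f$ whenever $f(u_1)\ne f(u_2)$. $r_f(k:d_d,d_f)$ is the minimum $r$ for which such a code exists. *)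

(* Defs.v *)
From HB Require Import structures.
From mathcomp Require Import all_boot all_order all_algebra.
Set Implicit Arguments. Unset Strict Implicit. Unset Printing Implicit Defensive.
Import GRing.Theory.

Definition hamming (F : eqType) (m : nat) (x y : 'rV[F]_m) : nat :=
  #|[set i : 'I_m | x ord0 i != y ord0 i]|.

Definition sys_enc (F : Type) (k r : nat) (p : 'rV[F]_k -> 'rV[F]_r)
  (u : 'rV[F]_k) : 'rV[F]_(k + r) := row_mx u (p u).

Definition is_FCC (F : eqType) (T : eqType) (k r : nat)
  (f : 'rV[F]_k -> T) (dd df : nat) (p : 'rV[F]_k -> 'rV[F]_r) : Prop :=
  (forall u1 u2, u1 != u2 -> dd <= hamming (sys_enc p u1) (sys_enc p u2)) /\
  (forall u1 u2, f u1 != f u2 -> df <= hamming (sys_enc p u1) (sys_enc p u2)).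

(* An (f : d_d, d_f)-FCC with redundancy r exists. r_f(k : d_d, d_f) is the
   least such r, so "r_f >= m" means: every r for which one exists is >= m. *)
Definition FCC_exists (F : eqType) (T : eqType) (k : nat)
  (f : 'rV[F]_k -> T) (dd df r : nat) : Prop :=
  exists p : 'rV[F]_k -> 'rV[F]_r, is_FCC f dd df p.

(* Main.v *)
Require Import Defs.
From mathcomp Require Import all_boot all_order all_algebra.
From mathcomp Require Import zify ring.
Set Implicit Arguments. Unset Strict Implicit. Unset Printing Implicit Defensive.
Import GRing.Theory.

Section Ball.
Variable F : finFieldType.

Definition sup m (z : 'rV[F]_m) := [set i | z ord0 i != 0%R].

Lemma support_count m (S : {set 'I_m}) :
  #|[set z : 'rV[F]_m | sup z == S]| = (#|F| - 1) ^ #|S|.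
Proof.
have ->: [set z : 'rV[F]_m | sup z == S] =
   [set ((\row_i g i)%R : 'rV[F]_m) | g : {ffun 'I_m -> F} in pffun_on (0%R : F) S (predC1 0%R)].
  apply/setP => z; rewrite inE; apply/idP/imsetP.
  - move/eqP=> <-; exists [ffun i => z ord0 i].
      apply/pffun_onP; split.
        by apply/subsetP=> i; rewrite !inE ffunE.
      by move=> y /imageP [i]; rewrite inE => Hi ->; rewrite ffunE inE.
    by apply/rowP => i; rewrite !mxE ffunE.
  - case=> g /pffun_onP [Hs Hi] ->; apply/eqP/setP => i; rewrite !inE mxE.
    apply/idP/idP => H.
      by apply: (subsetP Hs); rewrite inE.
    have: g i \in image g S by apply/imageP; exists i.
    by move/Hi; rewrite inE.
rewrite card_in_imset; last first.
  move=> g1 g2 _ _ /rowP H; apply/ffunP => i; by have := H i; rewrite !mxE.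
rewrite card_pffun_on.
by rewrite cardC1 subn1.
Qed.

Definition V q j t := \sum_(0 <= i < t.+1) 'C(j, i) * (q - 1) ^ i.

Lemma ball_count m t :
  #|[set z : 'rV[F]_m | #|sup z| <= t]| = V #|F| m t.
Proof.
rewrite -sum1_card (partition_big (@sup m) (fun S => #|S| <= t)); last first.
  by move=> z; rewrite inE.
under eq_bigr => S HS.
  rewrite (eq_bigl (fun z => z \in [set z : 'rV[F]_m | sup z == S])); last first.
    by move=> z; rewrite !inE; case: eqP => [->|]; rewrite ?HS ?andbF.
  rewrite sum1_card support_count.
over.
rewrite (partition_big (fun S : {set 'I_m} => (inord #|S| : 'I_t.+1)) predT) //.
rewrite /V big_mkord; apply: eq_bigr => i _.
rewrite (eq_bigl (fun S => S \in [set S : {set 'I_m} | #|S| == i])); last first.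
  move=> S; rewrite inE; apply/idP/idP.
    case/andP=> H /eqP <-; rewrite inordK //.
  move/eqP=> H; rewrite H -ltnS ltn_ord /=.
  by rewrite inord_val.
rewrite (eq_bigr (fun _ => (#|F| - 1) ^ i)); last first.
  by move=> S; rewrite inE => /eqP ->.
by rewrite sum_nat_const card_draws card_ord mulnC.
Qed.

Lemma V_step q j t : 0 < q ->
  V q j.+1 t.+1 = V q j t.+1 + (q - 1) * V q j t.
Proof.
move=> q0; elim: t => [|t IH].
  rewrite /V !big_mkord !big_ord_recr !big_ord0 /= !bin0 !bin1 !expn0 !expn1.
  ring.

rewrite /V big_nat_recr //= -/(V q j.+1 t.+1) IH binS.
rewrite (big_nat_recr t.+2) //= -/(V q j t.+1).
rewrite [X in _ = _ + _ * X]/V (big_nat_recr t.+1) //= -/(V q j t).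
rewrite !expnS; ring.
Qed.

Lemma V_mono q j t : V q j t <= V q j t.+1.
Proof. by rewrite /V (big_nat_recr t.+1) //= leq_addr. Qed.

Lemma V_le q j t : 0 < q -> V q j.+1 t <= q * V q j t.
Proof.
move=> q0; case: t => [|t].
  by rewrite /V !big_nat1 !bin0 expn0 !muln1.
rewrite V_step //.
have := V_mono q j t.
have -> : q * V q j t.+1 = V q j t.+1 + (q - 1) * V q j t.+1.
  by rewrite -{1}(subnKC q0) mulnDl mul1n.
by move=> H; rewrite leq_add2l leq_mul2l H orbT.
Qed.

Lemma V_le_pow q j d t : 0 < q -> V q (j + d) t <= q ^ d * V q j t.
Proof.
move=> q0; elim: d => [|d IH]; first by rewrite addn0 expn0 mul1n.
by rewrite addnS (leq_trans (V_le _ _ q0)) // expnS -mulnA leq_mul2l IH orbT.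
Qed.

Lemma ham_sym m (x y : 'rV[F]_m) : hamming x y = hamming y x.
Proof. by apply: eq_card => i; rewrite !inE eq_sym. Qed.

Lemma ham_tri m (x y z : 'rV[F]_m) : hamming x z <= hamming x y + hamming y z.
Proof.
rewrite /hamming; apply: leq_trans (leq_card_setU _ _).
apply: subset_leq_card; apply/subsetP => i; rewrite !inE.
by case: (x ord0 i =P y ord0 i) => [->|].
Qed.

Lemma ham_sup m (x z : 'rV[F]_m) : hamming x (x + z)%R = #|sup z|.
Proof.
apply: eq_card => i; rewrite !inE mxE.
by rewrite -subr_eq0 opprD addrA subrr sub0r oppr_eq0.
Qed.

Lemma ham_le1 m (y y' : 'rV[F]_m) (j : nat) :
  hamming (\row_l (if (l < j)%N then y' ord0 l else y ord0 l))%R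
          (\row_l (if (l < j.+1)%N then y' ord0 l else y ord0 l))%R <= 1.
Proof.
apply/card_le1_eqP => x1 x2; rewrite !inE !mxE => H1 H2.
apply: val_inj.
have E : forall l : 'I_m, (if (l < j)%N then y' ord0 l else y ord0 l) !=
     (if (l < j.+1)%N then y' ord0 l else y ord0 l) -> val l = j.
  move=> l; case: (ltngtP l j) => [lj|jl|//].
    by rewrite ltnS (ltnW lj) eqxx.
  by rewrite ltnS leqNgt jl /= eqxx.
by rewrite (E _ H1) (E _ H2).
Qed.
End Ball.

Unset Implicit Arguments.
Set Strict Implicit.

Theorem corollary5 (F : finFieldType) (T : eqType) (k : nat)
  (f : 'rV[F]_k -> T) (dd df n : nat) :
  (exists u1 u2, f u1 != f u2) ->
  0 < dd -> dd < df ->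
  k <= n ->
  #|F| ^ (n - k) = \sum_(0 <= i < (dd - 1) %/ 2 + 1) 'C(n, i) * (#|F| - 1) ^ i ->
  forall r : nat, FCC_exists f dd df r -> n - k + 1 <= r.
Proof.
move=> [a [b fab]] dd0 dddf kn Hq r [p [Hd Hf]].
rewrite leqNgt; apply/negP; rewrite addn1 ltnS => Hr.
set t := (dd - 1) %/ 2.
have Ht2 : t.*2 < dd.
  have := leq_trunc_div (dd - 1) 2; rewrite -/t mulnC mul2n; lia.
have q0 : 0 < #|F| by apply/card_gt0P; exists 0%R.
set c := sys_enc p.
have HV : #|F| ^ r <= V #|F| (k + r) t.
  have := @V_le_pow #|F| (k + r) (n - k - r) t q0.
  have -> : k + r + (n - k - r) = n by lia.
  rewrite {1}/V -addn1 -Hq.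
  have -> : #|F| ^ (n - k) = #|F| ^ (n - k - r) * #|F| ^ r.
    by rewrite -expnD; congr (_ ^ _); lia.
  by rewrite leq_pmul2l // expn_gt0 q0.
have cover : forall y : 'rV[F]_(k + r), exists u, hamming (c u) y <= t.
  set B := [set z : 'rV[F]_(k + r) | #|sup z| <= t].
  set D := setX [set: 'rV[F]_k] B.
  pose g (uz : 'rV[F]_k * 'rV[F]_(k + r)) := (c uz.1 + uz.2)%R.
  have ginj : {in D &, injective g}.
    move=> [u1 z1] [u2 z2] HD1 HD2; rewrite /g /= => E.
    move: HD1 HD2; rewrite !inE /= => H1 H2.
    have Eu : u1 = u2.
      apply/eqP; apply: contraTT (ham_tri (c u1) (c u1 + z1)%R (c u2)).
      move=> /Hd Hdd; rewrite -ltnNge; apply: leq_trans Hdd.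
      rewrite ham_sup E ham_sym ham_sup; move: Ht2; rewrite -addnn =>Ht2. by apply: leq_ltn_trans Ht2; apply: leq_add.
    by subst u2; congr pair; apply: (addrI (c u1)).
  have : g @: D == [set: 'rV[F]_(k + r)].
    rewrite eqEcard subsetT /= card_in_imset // cardsX cardsT !card_mx.
    rewrite cardsT card_mx /B ball_count !mul1n expnD leq_mul2l HV orbT //.
  move/eqP => E y; have : y \in g @: D by rewrite E inE.
  case/imsetP => [[u z]]; rewrite !inE /= => Hz ->; exists u.
  by rewrite /g ham_sup.
have NoBad : forall u1 u2, hamming (c u1) (c u2) <= t.*2.+1 -> f u1 = f u2.
  move=> u1 u2 H; apply/eqP; apply/negP => /negP Hne.
  have := Hf _ _ Hne; rewrite -/c => H'.
  have : df <= dd by apply: leq_trans H' (leq_trans H Ht2).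
  by rewrite leqNgt dddf.
pose cov y := odflt a [pick u | hamming (c u) y <= t].
have covP : forall y, hamming (c (cov y)) y <= t.
  move=> y; rewrite /cov; case: pickP => [u //|H].
  by have [u Hu] := cover y; have := H u; rewrite Hu.
have covc : forall u, cov (c u) = u.
  move=> u; apply/eqP; apply/negPn/negP => /Hd; rewrite -/c => H.
  have := leq_trans H (covP (c u)).
  have := Ht2; rewrite -addnn; lia.
pose z (j : nat) := (\row_l (if (l < j)%N then (c b) ord0 l else (c a) ord0 l))%R.
have Hz : forall j, f (cov (z j)) = f a.
  elim => [|j IH].
    have -> : z 0 = c a by apply/rowP => l; rewrite mxE.
    by rewrite covc.
  rewrite -IH; apply: NoBad.
  have T1 := ham_tri (c (cov (z j.+1))) (z j.+1) (c (cov (z j))).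
  have T2 := ham_tri (z j.+1) (z j) (c (cov (z j))).
  have H1 := covP (z j.+1); have H2 := covP (z j).
  rewrite ham_sym in H2.
  have H3 : hamming (z j.+1) (z j) <= 1 by rewrite ham_sym; exact: ham_le1.
  have -> : t.*2.+1 = t + (t + 1) by rewrite -addnn addn1 addnS.
  apply: (leq_trans T1).
  apply: leq_add => //; apply: (leq_trans T2); rewrite addnC; exact: leq_add.
have := Hz (k + r).
have -> : z (k + r) = c b by apply/rowP => l; rewrite mxE ltn_ord.
by rewrite covc => E; rewrite E eqxx in fab.
Qed.
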